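(* Let $N\in\mathbb N^+$, $\phi(\xi)=\xi\sqrt{\xi^2+1}$. Then there is $C>0$ independent of $N$ such that for all $0<|t|\le N^{-1}$ and all $x\in[-1,1]$, $$\Big|\sum_{1\le k\le N}e^{i(t\phi(k)+kx)}\Big|\le C|t|^{-1/2}.$$ *)

(* Defs.v *)
From Stdlib Require Import Reals.
From Coquelicot Require Import Coquelicot.
Open Scope R_scope.

Definition phi (xi : R) : R := xi * sqrt (xi ^ 2 + 1).

Definition expi (theta : R) : Complex.C := (cos theta, sin theta).

Definition SN (N : nat) (t x : R) : Complex.C :=
  sum_n_m (fun k : nat => expi (t * phi (INR k) + INR k * x)) 1 N.

(* Main.v *)
Require Import Defs.
From Stdlib Require Import Reals Lra Lia Psatz.
From Coquelicot Require Import Coquelicot.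
Open Scope R_scope.

Lemma sin_half_lb (h : R) : 0 <= h -> h <= 3/2 -> h/2 <= sin h.
Proof.
  intros H0 H1.
  assert (HP := PI2_3_2).
  destruct (SIN h H0 ltac:(lra)) as [Hl _].
  eapply Rle_trans; [|exact Hl].
  unfold sin_lb, sin_approx, sin_term. simpl.
  assert (Hu : 0 <= 1/2 - h^2/6 + h^4/120 - h^6/5040).
  { assert (0 <= h^2) by nra. assert (h^2 <= 9/4) by nra.
    assert (h^6 <= 729/64) by (replace (h^6) with (h^2*h^2*h^2) by ring; set (u:=h^2) in *; assert (u*u <= 81/16) by nra; nra).
    assert (0 <= h^4) by nra. nra. }
  assert (0 <= h * (1/2 - h^2/6 + h^4/120 - h^6/5040)) by nra.
  field_simplify. nra.
Qed.

Lemma phi_bounds (j : R) : 0 <= j -> j^2 <= phi j <= j^2 + 1/2.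
Proof.
  intros Hj. unfold phi.
  assert (Hs := sqrt_sqrt (j^2+1) ltac:(nra)).
  assert (Hp := sqrt_pos (j^2+1)).
  set (s := sqrt (j^2+1)) in *.
  assert (Hsj : j <= s).
  { destruct (Rle_or_lt j s) as [?|Hlt]; auto. nra. }
  split.
  - replace (j^2) with (j*j) by ring. apply Rmult_le_compat_l; lra.
  - assert (0 <= (s-j)^2) by nra. nra.
Qed.

Lemma phi_lb1 (j : R) : 1 <= j -> j^2 + 3/8 <= phi j.
Proof.
  intros Hj. unfold phi.
  assert (Hs := sqrt_sqrt (j^2+1) ltac:(nra)).
  assert (Hp := sqrt_pos (j^2+1)).
  set (s := sqrt (j^2+1)) in *.
  assert (Hsj : j <= s).
  { destruct (Rle_or_lt j s) as [?|Hlt]; auto. nra. }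
  assert (s <= 5/3*j).
  { destruct (Rle_or_lt s (5/3*j)) as [?|Hlt]; auto. nra. }
  assert (j*(s-j) * (s+j) = j) by nra.
  assert (j*(s-j) * (8/3*j) >= j) by nra.
  nra.
Qed.

Fixpoint rs (f : nat -> R) (a n : nat) : R :=
  match n with O => 0 | S n => rs f a n + f (a+n)%nat end.

Lemma rs_ext f g a n : (forall k, (a <= k < a+n)%nat -> f k = g k) -> rs f a n = rs g a n.
Proof. induction n; simpl; intros H; auto. rewrite IHn by (intros; apply H; lia). rewrite H by lia. auto. Qed.

Lemma rs_plus f g a n : rs (fun k => f k + g k) a n = rs f a n + rs g a n.
Proof. induction n; simpl; [lra|]. rewrite IHn. ring. Qed.

Lemma rs_scal c f a n : rs (fun k => c * f k) a n = c * rs f a n.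
Proof. induction n; simpl; [lra|]. rewrite IHn. ring. Qed.

Lemma rs_opp f a n : rs (fun k => - f k) a n = - rs f a n.
Proof. induction n; simpl; [lra|]. rewrite IHn. ring. Qed.

Lemma rs_tel w a n : rs (fun k => w (S k) - w k) a n = w (a+n)%nat - w a.
Proof. induction n; simpl. rewrite Nat.add_0_r; ring. rewrite IHn, Nat.add_succ_r. ring. Qed.

Lemma rs_split f a n m : rs f a (n+m) = rs f a n + rs f (a+n) m.
Proof. induction m; simpl. rewrite Nat.add_0_r; ring. rewrite Nat.add_succ_r. simpl. rewrite IHm, Nat.add_assoc. ring. Qed.

Lemma rs_bound f a n : (forall k, (a <= k < a+n)%nat -> Rabs (f k) <= 1) -> Rabs (rs f a n) <= INR n.
Proof.
  induction n; cbn [rs]; intros H. rewrite Rabs_R0; simpl; lra.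
  rewrite S_INR. eapply Rle_trans; [apply Rabs_triang|].
  assert (Rabs (f (a+n)%nat) <= 1) by (apply H; lia).
  assert (Rabs (rs f a n) <= INR n) by (apply IHn; intros; apply H; lia). lra.
Qed.

Lemma abel (r w : nat -> R) j m :
  (forall k, Rabs (w k) <= 1) ->
  (forall k, (j <= k)%nat -> (k < j+m)%nat -> r (S k) <= r k) ->
  Rabs (rs (fun k => r k * (w (S k) - w k)) j (S m) - r (j+m)%nat * w (S (j+m)))
   <= Rabs (r j) + (r j - r (j+m)%nat).
Proof.
  intros Hw. induction m; intros Hm.
  - simpl. rewrite Nat.add_0_r.
    replace (0 + r j * (w (S j) - w j) - r j * w (S j)) with (- (r j * w j)) by ring.
    rewrite Rabs_Ropp, Rabs_mult. specialize (Hw j).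
    assert (0 <= Rabs (r j)) by apply Rabs_pos. nra.
  - specialize (IHm ltac:(intros; apply Hm; lia)).
    change (rs (fun k => r k * (w (S k) - w k)) j (S (S m))) with
      (rs (fun k => r k * (w (S k) - w k)) j (S m) + r (j + S m)%nat * (w (S (j + S m)) - w (j + S m)%nat)).
    rewrite Nat.add_succ_r in *.
    assert (Hd : r (S (j+m)) <= r (j+m)%nat) by (apply Hm; lia).
    set (T := rs (fun k => r k * (w (S k) - w k)) j (S m)) in *.
    replace (T + r (S (j + m)) * (w (S (S (j + m))) - w (S (j + m))) - r (S (j + m)) * w (S (S (j + m))))
      with ((T - r (j+m)%nat * w (S (j+m))) + (r (j+m)%nat - r (S (j+m))) * w (S (j+m))) by ring.
    eapply Rle_trans; [apply Rabs_triang|]. rewrite Rabs_mult.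
    rewrite (Rabs_right (r (j+m)%nat - r (S (j+m)))) by lra.
    specialize (Hw (S (j+m))).
    assert (0 <= r (j+m)%nat - r (S (j+m))) by lra. nra.
Qed.

Lemma cos_id m h : sin h <> 0 ->
  cos (m+h) = 1/2*(cos (m+h) - cos (m-h)) + cos h/(2*sin h)*(sin (m+h) - sin (m-h)).
Proof. intros H. rewrite cos_plus, cos_minus, sin_plus, sin_minus. field. auto. Qed.

Lemma sin_id m h : sin h <> 0 ->
  sin (m+h) = 1/2*(sin (m+h) - sin (m-h)) - cos h/(2*sin h)*(cos (m+h) - cos (m-h)).
Proof. intros H. rewrite cos_plus, cos_minus, sin_plus, sin_minus. field. auto. Qed.

Definition Rc (u v : R) := cos ((v-u)/2) / (2 * sin ((v-u)/2)).

Lemma cos_id2 u v : sin ((v-u)/2) <> 0 ->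
  cos v = 1/2*(cos v - cos u) + Rc u v * (sin v - sin u).
Proof.
  intros H. unfold Rc. pose proof (cos_id ((u+v)/2) ((v-u)/2) H) as E.
  replace ((u+v)/2 + (v-u)/2) with v in E by field.
  replace ((u+v)/2 - (v-u)/2) with u in E by field. exact E.
Qed.

Lemma sin_id2 u v : sin ((v-u)/2) <> 0 ->
  sin v = 1/2*(sin v - sin u) + - (Rc u v * (cos v - cos u)).
Proof.
  intros H. unfold Rc. pose proof (sin_id ((u+v)/2) ((v-u)/2) H) as E.
  replace ((u+v)/2 + (v-u)/2) with v in E by field.
  replace ((u+v)/2 - (v-u)/2) with u in E by field. rewrite E at 1. ring.
Qed.

Lemma sinabs h : Rabs h <= 3/2 -> Rabs h / 2 <= Rabs (sin h).
Proof.
  intros H. destruct (Rle_or_lt 0 h) as [H0|H0].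
  - rewrite Rabs_right in * by lra. pose proof (sin_half_lb h H0 H).
    rewrite Rabs_right; lra.
  - rewrite Rabs_left in * by lra. pose proof (sin_half_lb (-h) ltac:(lra) H).
    rewrite sin_neg in H1. rewrite Rabs_left1; lra.
Qed.

Lemma sin_pos_of h : 0 < h -> h <= 3/2 -> 0 < sin h.
Proof. intros. pose proof PI2_3_2. apply sin_gt_0; lra. Qed.

Lemma sin_neg_of h : h < 0 -> -(3/2) <= h -> sin h < 0.
Proof. intros. pose proof (sin_pos_of (-h) ltac:(lra) ltac:(lra)). rewrite sin_neg in H1. lra. Qed.

Lemma Rmono h h' : h <= h' -> h' - h <= 3/2 -> 0 < sin h * sin h' ->
  cos h' / (2 * sin h') <= cos h / (2 * sin h).
Proof.
  intros H1 H2 H3. pose proof PI2_3_2.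
  assert (0 <= sin (h' - h)) by (apply sin_ge_0; lra).
  assert (sin h <> 0) by (intro E; rewrite E in H3; lra).
  assert (sin h' <> 0) by (intro E; rewrite E in H3; lra).
  assert (E : cos h / (2 * sin h) - cos h' / (2 * sin h') = sin (h'-h) / (2 * (sin h * sin h'))).
  { rewrite sin_minus. field. auto. }
  assert (0 <= sin (h'-h) / (2 * (sin h * sin h'))).
  { apply Rmult_le_pos; auto. left. apply Rinv_0_lt_compat. lra. }
  lra.
Qed.

Lemma Rc_bound u v d : 0 < d -> d <= Rabs (v-u) <= 3 ->
  sin ((v-u)/2) <> 0 /\ Rabs (Rc u v) <= 2/d.
Proof.
  intros Hd [H1 H2].
  assert (Hh : Rabs ((v-u)/2) <= 3/2).
  { unfold Rdiv. rewrite Rabs_mult, Rabs_inv, (Rabs_right 2) by lra. lra. }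
  pose proof (sinabs _ Hh) as Hs.
  assert (Rabs ((v-u)/2) = Rabs (v-u)/2) by
    (unfold Rdiv; rewrite Rabs_mult, Rabs_inv, (Rabs_right 2) by lra; lra).
  assert (Hs' : d/4 <= Rabs (sin ((v-u)/2))) by lra.
  assert (Hn : sin ((v-u)/2) <> 0).
  { intro E. rewrite E, Rabs_R0 in Hs'. assert (0 < d/4) by lra. lra. }
  split; auto. unfold Rc. unfold Rdiv at 1. rewrite Rabs_mult, Rabs_inv, Rabs_mult, (Rabs_right 2) by lra.
  pose proof (COS_bound ((v-u)/2)) as [Hc1 Hc2].
  assert (Rabs (cos ((v-u)/2)) <= 1) by (apply Rabs_le; lra).
  assert (0 < Rabs (sin ((v - u) / 2))) by lra.
  apply (Rmult_le_reg_r (2 * Rabs (sin ((v - u) / 2)))). lra.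
  rewrite Rmult_assoc, Rinv_l by lra.
  replace (2 / d * (2 * Rabs (sin ((v - u) / 2)))) with (4/d * Rabs (sin ((v - u) / 2))) by (field; lra).
  assert (1 <= 4/d * Rabs (sin ((v - u) / 2))).
  { apply (Rmult_le_reg_l (d/4)). lra. replace (d/4 * (4 / d * Rabs (sin ((v - u) / 2)))) with (Rabs (sin ((v - u) / 2))) by (field; lra). lra. }
  pose proof (Rabs_pos (cos ((v - u) / 2))). nra.
Qed.

Lemma Rc_mono a b c : Rabs (b-a) <= 3 -> Rabs (c-b) <= 3 ->
  ((0 < b-a /\ 0 < c-b) \/ (b-a < 0 /\ c-b < 0)) -> b-a <= c-b ->
  Rc b c <= Rc a b.
Proof.
  intros H1 H2 Hs H3. unfold Rc. apply Rmono.
  - lra.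
  - apply Rabs_le_between in H1; apply Rabs_le_between in H2. destruct Hs; lra.
  - apply Rabs_le_between in H1; apply Rabs_le_between in H2.
    destruct Hs as [[? ?]|[? ?]].
    + apply Rmult_lt_0_compat; apply sin_pos_of; lra.
    + pose proof (sin_neg_of ((b-a)/2) ltac:(lra) ltac:(lra)).
      pose proof (sin_neg_of ((c-b)/2) ltac:(lra) ltac:(lra)). nra.
Qed.

Lemma abel_bound (r w : nat -> R) j m d :
  (forall k, Rabs (w k) <= 1) ->
  (forall k, (j <= k)%nat -> (k < j+m)%nat -> r (S k) <= r k) ->
  (forall k, (j <= k <= j+m)%nat -> Rabs (r k) <= 2/d) ->
  Rabs (rs (fun k => r k * (w (S k) - w k)) j (S m)) <= 8/d.
Proof.
  intros Hw Hm Hr. pose proof (abel r w j m Hw Hm) as A.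
  set (T := rs (fun k => r k * (w (S k) - w k)) j (S m)) in *.
  assert (H1 := Hr j ltac:(lia)). assert (H2 := Hr (j+m)%nat ltac:(lia)).
  assert (Rabs (r (j+m)%nat * w (S (j+m))) <= 2/d).
  { rewrite Rabs_mult. specialize (Hw (S (j+m))). pose proof (Rabs_pos (r (j+m)%nat)). nra. }
  replace T with ((T - r (j+m)%nat * w (S (j+m))) + r (j+m)%nat * w (S (j+m))) by ring.
  eapply Rle_trans; [apply Rabs_triang|].
  apply Rabs_le_between in H1; apply Rabs_le_between in H2.
  assert (r j - r (j+m)%nat <= 4/d) by lra.
  assert (Rabs (r j) <= 2/d) by (apply Rabs_le; lra). lra.
Qed.

Lemma KL (G : nat -> R) (d : R) (j n : nat) :
  0 < d ->
  (forall k, (j <= k < j+n)%nat -> d <= Rabs (G (S k) - G k) <= 3) ->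
  ((forall k, (j <= k < j+n)%nat -> 0 < G (S k) - G k) \/
   (forall k, (j <= k < j+n)%nat -> G (S k) - G k < 0)) ->
  (forall k, (j <= k)%nat -> (S k < j+n)%nat -> G (S k) - G k <= G (S (S k)) - G (S k)) ->
  Rabs (rs (fun k => cos (G (S k))) j n) <= 1 + 8/d /\
  Rabs (rs (fun k => sin (G (S k))) j n) <= 1 + 8/d.
Proof.
  intros Hd Hb Hsg Hmo.
  destruct n as [|m].
  { simpl. rewrite Rabs_R0. assert (0 < 8/d) by (apply Rdiv_lt_0_compat; lra). lra. }
  set (r := fun k => Rc (G k) (G (S k))).
  assert (Hr : forall k, (j <= k <= j+m)%nat -> Rabs (r k) <= 2/d).
  { intros k Hk. apply (Rc_bound _ _ d Hd). apply Hb. lia. }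
  assert (Hn : forall k, (j <= k <= j+m)%nat -> sin ((G (S k) - G k)/2) <> 0).
  { intros k Hk. apply (Rc_bound _ _ d Hd). apply Hb. lia. }
  assert (Hrm : forall k, (j <= k)%nat -> (k < j+m)%nat -> r (S k) <= r k).
  { intros k H1 H2. unfold r. apply Rc_mono.
    - apply Hb; lia.
    - apply Hb; lia.
    - destruct Hsg as [Hp|Hp]; [left|right]; split; apply Hp; lia.
    - apply Hmo; lia. }
  assert (Hwc : forall k, Rabs (cos (G k)) <= 1) by (intros; apply Rabs_le; apply COS_bound).
  assert (Hws : forall k, Rabs (sin (G k)) <= 1) by (intros; apply Rabs_le; apply SIN_bound).
  split.
  - rewrite (rs_ext _ (fun k => 1/2 * (cos (G (S k)) - cos (G k)) + r k * (sin (G (S k)) - sin (G k)))).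
    2:{ intros k Hk. apply cos_id2. apply Hn. lia. }
    rewrite rs_plus, rs_scal, (rs_tel (fun k => cos (G k))).
    pose proof (abel_bound r (fun k => sin (G k)) j m d Hws Hrm Hr).
    eapply Rle_trans; [apply Rabs_triang|].
    assert (Rabs (1/2 * (cos (G (j + S m)%nat) - cos (G j))) <= 1).
    { rewrite Rabs_mult, Rabs_right by lra. pose proof (Hwc (j + S m)%nat). pose proof (Hwc j).
      pose proof (Rabs_triang (cos (G (j + S m)%nat)) (- cos (G j))) as HT. rewrite Rabs_Ropp in HT. 
      unfold Rminus. lra. }
    lra.
  - rewrite (rs_ext _ (fun k => 1/2 * (sin (G (S k)) - sin (G k)) + - (r k * (cos (G (S k)) - cos (G k))))).
    2:{ intros k Hk. apply sin_id2. apply Hn. lia. }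
    rewrite rs_plus, rs_scal, (rs_tel (fun k => sin (G k))), rs_opp.
    pose proof (abel_bound r (fun k => cos (G k)) j m d Hwc Hrm Hr).
    eapply Rle_trans; [apply Rabs_triang|]. rewrite Rabs_Ropp.
    assert (Rabs (1/2 * (sin (G (j + S m)%nat) - sin (G j))) <= 1).
    { rewrite Rabs_mult, Rabs_right by lra. pose proof (Hws (j + S m)%nat). pose proof (Hws j).
      pose proof (Rabs_triang (sin (G (j + S m)%nat)) (- sin (G j))) as HT. rewrite Rabs_Ropp in HT. 
      unfold Rminus. lra. }
    lra.
Qed.

Lemma prefix (P : nat -> Prop) (Pd : forall k, {P k} + {~P k}) j n :
  (forall k, (j <= k)%nat -> (S k < j+n)%nat -> ~ P k -> ~ P (S k)) ->
  exists m, (m <= n)%nat /\ (forall k, (j <= k < j+m)%nat -> P k) /\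
            (forall k, (j+m <= k < j+n)%nat -> ~ P k).
Proof.
  induction n; intros Hc.
  - exists 0%nat. split; [lia|]. split; intros; lia.
  - destruct IHn as (m & Hm & H1 & H2). { intros k Ha Hb' Hc'; apply Hc; auto; lia. }
    destruct (Nat.eq_dec m n) as [->|Hne].
    + destruct (Pd (j+n)%nat) as [Hp|Hp].
      * exists (S n). split; [lia|]. split; [|intros; lia].
        intros k Hk. destruct (Nat.eq_dec k (j+n)) as [->|]; auto. apply H1; lia.
      * exists n. split; [lia|]. split; auto. intros k Hk.
        assert (k = j+n)%nat by lia. subst; auto.
    + exists m. split; [lia|]. split; auto. intros k Hk.
      destruct (Nat.eq_dec k (j+n)) as [->|]; [|apply H2; lia].
      replace (j+n)%nat with (S (j+n-1)) by lia. apply Hc; try lia. apply H2; lia.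
Qed.

Lemma Dgrow (D : nat -> R) t j : (forall k, D k + t <= D (S k)) ->
  forall i, D j + INR i * t <= D (j+i)%nat.
Proof.
  intros H. induction i. rewrite Nat.add_0_r. simpl. lra.
  rewrite S_INR, Nat.add_succ_r. specialize (H (j+i)%nat). lra.
Qed.

Lemma decomp (G : nat -> R) (t d : R) (N : nat) :
  0 < d <= 1 -> d * d = t ->
  (forall k, (k < N)%nat -> Rabs (G (S k) - G k) <= 3) ->
  (forall k, G (S k) - G k + t <= G (S (S k)) - G (S k)) ->
  Rabs (rs (fun k => cos (G (S k))) 0 N) <= 21/d /\
  Rabs (rs (fun k => sin (G (S k))) 0 N) <= 21/d.
Proof.
  intros Hd Ht Hb Hg.
  set (D := fun k => G (S k) - G k).
  assert (Hg' : forall k, D k + t <= D (S k)) by (intros; unfold D; apply Hg).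
  assert (Hmo : forall k, D k <= D (S k)) by (intros; specialize (Hg' k); nra).
  destruct (prefix (fun k => D k <= -d) (fun k => Rle_dec (D k) (-d)) 0 N) as (m1 & Hm1 & A1 & B1).
  { intros k _ _ H1 H2. apply H1. specialize (Hmo k). lra. }
  destruct (prefix (fun k => D k < d) (fun k => Rlt_dec (D k) d) m1 (N-m1)) as (m2 & Hm2 & A2 & B2).
  { intros k _ _ H1 H2. apply H1. specialize (Hmo k). lra. }
  set (m3 := (N - m1 - m2)%nat).
  assert (HN : N = (m1 + (m2 + m3))%nat) by (unfold m3; lia).
  assert (Hmid : INR m2 <= 2/d + 1).
  { destruct m2 as [|p]. simpl. assert (0 < 2/d) by (apply Rdiv_lt_0_compat; lra). lra.
    pose proof (Dgrow D t m1 Hg' p) as Hgr.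
    assert (D (m1+p)%nat < d) by (apply A2; lia).
    assert (-d < D m1).
    { destruct (Rle_dec (D m1) (-d)) as [Hx|Hx]; [|lra]. exfalso. apply (B1 m1); [lia|exact Hx]. }
    rewrite S_INR.
    assert (Hpt : INR p * t < 2 * d) by lra.
    assert (INR p < 2/d).
    { apply (Rmult_lt_reg_r d). lra. replace (2/d*d) with 2 by (field; lra).
      rewrite <- Ht in Hpt. pose proof (pos_INR p). nra. }
    lra. }
  assert (K1 := KL G d 0 m1 ltac:(lra)).
  assert (K3 := KL G d (m1+m2) m3 ltac:(lra)).
  assert (Hm' : forall k, (k < N)%nat -> d <= D k \/ D k <= -d ->
            d <= Rabs (G (S k) - G k) <= 3).
  { intros k Hk [H|H]; split; try (apply Hb; auto); fold (D k).
    rewrite Rabs_right; lra. rewrite Rabs_left; lra. }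
  destruct K1 as [K1c K1s].
  { intros k Hk. apply Hm'. lia. right. apply A1; lia. }
  { right. intros k Hk. fold (D k). assert (D k <= -d) by (apply A1; lia). lra. }
  { intros k _ _. apply Hmo. }
  destruct K3 as [K3c K3s].
  { intros k Hk. apply Hm'. lia. left. apply Rnot_lt_le. apply B2; lia. }
  { left. intros k Hk. fold (D k). assert (~ D k < d) by (apply B2; lia). lra. }
  { intros k _ _. apply Hmo. }
  assert (Hbound : forall f, (forall k, Rabs (f k) <= 1) ->
     Rabs (rs f 0 m1) <= 1 + 8/d -> Rabs (rs f (m1+m2) m3) <= 1 + 8/d ->
     Rabs (rs f 0 N) <= 21/d).
  { intros f Hf H1 H3. rewrite HN, rs_split, rs_split. simpl (0 + m1)%nat.
    assert (Rabs (rs f m1 m2) <= INR m2) by (apply rs_bound; auto).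
    assert (3 <= 3/d).
    { apply (Rmult_le_reg_r d). lra. replace (3/d*d) with 3 by (field; lra). nra. }
    replace (21/d) with ((1 + 8/d) + (2/d+1) + (1+8/d) + (3/d - 3)) by (field; lra).
    pose proof (Rabs_triang (rs f 0 m1 + rs f m1 m2) (rs f (m1+m2) m3)).
    pose proof (Rabs_triang (rs f 0 m1) (rs f m1 m2)). rewrite Rplus_assoc in H2. lra. }
  split; apply Hbound; auto; intros; apply Rabs_le.
  apply COS_bound. apply SIN_bound.
Qed.


Definition GG (t x : R) (k : nat) : R := t * phi (INR k) + INR k * x.

Lemma SN_rs N t x : SN N t x =
  (rs (fun k => cos (GG t x (S k))) 0 N, rs (fun k => sin (GG t x (S k))) 0 N).
Proof.
  unfold SN. induction N.
  - rewrite sum_n_m_zero by lia. reflexivity.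
  - rewrite sum_n_Sm by lia. rewrite IHN. reflexivity.
Qed.

Lemma Cmod_le a b : Cmod (a, b) <= Rabs a + Rabs b.
Proof.
  unfold Cmod. simpl fst; simpl snd.
  rewrite <- (sqrt_pow2 (Rabs a + Rabs b)) by (pose proof (Rabs_pos a); pose proof (Rabs_pos b); lra).
  apply sqrt_le_1_alt. rewrite <- (pow2_abs a), <- (pow2_abs b).
  pose proof (Rabs_pos a); pose proof (Rabs_pos b). nra.
Qed.

Lemma GG_diff t x k : GG t x (S k) - GG t x k = t * (phi (INR k + 1) - phi (INR k)) + x.
Proof. unfold GG. rewrite S_INR. ring. Qed.

Lemma main_pos N t x : (1 <= N)%nat -> 0 < t -> t <= / INR N -> -1 <= x <= 1 ->
  Rabs (rs (fun k => cos (GG t x (S k))) 0 N) + Rabs (rs (fun k => sin (GG t x (S k))) 0 N)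
  <= 42 / sqrt t.
Proof.
  intros HN Ht HtN Hx.
  assert (HNr : 1 <= INR N) by (apply (le_INR 1); lia).
  assert (HtN' : t * INR N <= 1).
  { apply (Rmult_le_compat_r (INR N)) in HtN; [|lra]. rewrite Rinv_l in HtN; lra. }
  assert (Ht1 : t <= 1) by nra.
  set (d := sqrt t).
  assert (Hd0 : 0 < d) by (apply sqrt_lt_R0; auto).
  assert (Hd1 : d <= 1) by (unfold d; rewrite <- sqrt_1; apply sqrt_le_1_alt; auto).
  assert (Hdd : d * d = t) by (apply sqrt_sqrt; lra).
  destruct (decomp (GG t x) t d N ltac:(lra) Hdd) as [H1 H2].
  - intros k Hk. rewrite GG_diff.
    assert (Hk' : INR k + 1 <= INR N) by (rewrite <- S_INR; apply le_INR; lia).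
    pose proof (pos_INR k).
    destruct (phi_bounds (INR k) ltac:(lra)).
    destruct (phi_bounds (INR k + 1) ltac:(lra)).
    assert (0 <= phi (INR k + 1) - phi (INR k) <= 2 * INR N) by nra.
    apply Rabs_le. nra.
  - intros k. rewrite !GG_diff. rewrite S_INR.
    pose proof (pos_INR k).
    destruct (phi_bounds (INR k) ltac:(lra)).
    destruct (phi_bounds (INR k + 1) ltac:(lra)).
    pose proof (phi_lb1 (INR k + 1 + 1) ltac:(lra)).
    assert (phi (INR k + 1 + 1) - phi (INR k + 1) - (phi (INR k + 1) - phi (INR k)) >= 1) by nra.
    nra.
  - unfold d in *. replace (42 / sqrt t) with (21/sqrt t + 21/sqrt t) by (field; lra).
    lra.
Qed.

Theorem lemma2p9 :
  exists Cst : R, 0 < Cst /\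
    forall (N : nat) (t x : R),
      (1 <= N)%nat ->
      0 < Rabs t -> Rabs t <= / INR N ->
      -1 <= x <= 1 ->
      Cmod (SN N t x) <= Cst * Rpower (Rabs t) (-(1/2)).
Proof.
  exists 42. split; [lra|].
  intros N t x HN Ht HtN Hx.
  assert (Hp : Rpower (Rabs t) (-(1/2)) = / sqrt (Rabs t)).
  { rewrite Rpower_Ropp. replace (1/2) with (/2) by field. rewrite Rpower_sqrt; auto. }
  rewrite Hp. rewrite SN_rs. eapply Rle_trans; [apply Cmod_le|].
  replace (42 * / sqrt (Rabs t)) with (42 / sqrt (Rabs t)) by (unfold Rdiv; ring).
  destruct (Rle_or_lt 0 t) as [H0|H0].
  - rewrite (Rabs_right t) in HtN, Ht |- * by lra. apply main_pos; auto.
  - rewrite (Rabs_left t) in HtN, Ht |- * by lra.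
    pose proof (main_pos N (-t) (-x) HN ltac:(lra) HtN ltac:(lra)) as M.
    assert (E : forall k, GG (-t) (-x) k = - GG t x k) by (intros; unfold GG; ring).
    rewrite (rs_ext (fun k => cos (GG (-t) (-x) (S k))) (fun k => cos (GG t x (S k)))) in M
      by (intros; rewrite E, cos_neg; auto).
    rewrite (rs_ext (fun k => sin (GG (-t) (-x) (S k))) (fun k => - sin (GG t x (S k)))) in M
      by (intros; rewrite E, sin_neg; auto).
    rewrite rs_opp, Rabs_Ropp in M. exact M.
Qed.
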